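(* Let $n\ge 2$, $m\ge 1$, $k\in\{1,\dots,n-1\}$, $h\in\mathbb{R}$, $W\in\mathbb{R}^{m\times(n-1)}$, $w\in\mathbb{R}^m$, $b\in\mathbb{R}^m$, and let $\sigma:\mathbb{R}\to\mathbb{R}$ be differentiable, with $\underline{\sigma}(x)=(\sigma(x_1),\dots,\sigma(x_m))^T$ for $x\in\mathbb{R}^m$. For $y=(y_1,\dots,y_n)^T\in\mathbb{R}^n$ and $j\in\{1,\dots,n\}$ let $\hat{y}^j=(y_1,\dots,y_{j-1},y_{j+1},\dots,y_n)^T\in\mathbb{R}^{n-1}$, and let $\hat{W}^k=(W_{1k},\dots,W_{mk})^T\in\mathbb{R}^m$ be the $k$-th column of $W$. Define maps $\mathcal{V}_{k,Up}^h,\mathcal{V}_{k,Low}^h:\mathbb{R}^n\to\mathbb{R}^n$ as follows: $Y=\mathcal{V}_{k,Up}^h(y)$ is given by $$Y_k = y_k + h\,(\hat{W}^k)^T\,\mathrm{diag}(w)\,\underline{\sigma}(W\hat{y}^k+b),\qquad Y_i=y_i\ \ (i\neq k),$$ and $Y=\mathcal{V}_{k,Low}^h(y)$ is given by $$Y_{k+1} = y_{k+1} - h\,(\hat{W}^k)^T\,\mathrm{diag}(w)\,\underline{\sigma}(W\hat{y}^{k+1}+b),\qquad Y_i=y_i\ \ (i\neq k+1).$$ Then each of $\mathcal{V}_{k,Up}^h$ and $\mathcal{V}_{k,Low}^h$ is symplectic with respect to the variable pair $(y_k,y_{k+1})$, i.e. for every $y\in\mathbb{R}^n$ the $2\times 2$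 Jacobian matrix $M=\frac{\partial (Y_k,Y_{k+1})}{\partial (y_k,y_{k+1})}(y)$ satisfies $M^T \begin{pmatrix}0&-1\\1&0\end{pmatrix} M=\begin{pmatrix}0&-1\\1&0\end{pmatrix}$, and each map is phase volume-preserving, i.e. $\det\left(\frac{\partial Y}{\partial y}(y)\right)=1$ for all $y\in\mathbb{R}^n$.
   Context: $\mathrm{diag}(w)$ denotes the $m\times m$ diagonal matrix with the entries of $w$ on its diagonal. These maps are the ''locally-symplectic modules'' (Up and Low modules for the variable pair $(y_k,y_{k+1})$). *)

(* Defs.v *)
From HB Require Import structures.
From mathcomp Require Import all_boot all_order all_algebra.
From mathcomp Require Import all_classical all_reals all_analysis.
Set Implicit Arguments. Unset Strict Implicit. Unset Printing Implicit Defensive.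
Import Order.TTheory GRing.Theory Num.Theory.
Local Open Scope ring_scope.

(* Dimension convention: the ambient dimension of the paper is n = N.+1,
   so y : 'cV_(N.+1), W : 'M_(m, N) (N = n - 1 columns).
   The paper's index k in {1,..,n-1} is encoded 0-based as k : 'I_N;
   the paper's coordinate k is then  idx_k k  and k+1 is  idx_k1 k. *)

Definition idx_k (N : nat) (k : 'I_N) : 'I_N.+1 := widen_ord (leqnSn N) k.
Definition idx_k1 (N : nat) (k : 'I_N) : 'I_N.+1 := lift ord0 k.

Definition yhat (R : Type) (N : nat) (y : 'cV[R]_N.+1) (j : 'I_N.+1) : 'cV[R]_N :=
  \col_(i < N) y (lift j i) 0.

Definition vterm (R : realType) (m N : nat) (sigma : R -> R)
  (W : 'M[R]_(m, N)) (w b : 'cV[R]_m) (k : 'I_N) (z : 'cV[R]_N) : R :=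
  ((col k W)^T *m diag_mx w^T *m map_mx sigma (W *m z + b)) 0 0.

Definition V_up (R : realType) (m N : nat) (sigma : R -> R) (h : R)
  (W : 'M[R]_(m, N)) (w b : 'cV[R]_m) (k : 'I_N) (y : 'cV[R]_N.+1) : 'cV[R]_N.+1 :=
  \col_i (if i == idx_k k
          then y (idx_k k) 0 + h * vterm sigma W w b k (yhat y (idx_k k))
          else y i 0).

Definition V_low (R : realType) (m N : nat) (sigma : R -> R) (h : R)
  (W : 'M[R]_(m, N)) (w b : 'cV[R]_m) (k : 'I_N) (y : 'cV[R]_N.+1) : 'cV[R]_N.+1 :=
  \col_i (if i == idx_k1 k
          then y (idx_k1 k) 0 - h * vterm sigma W w b k (yhat y (idx_k1 k))
          else y i 0).

Definition jacobianP (R : realType) (n : nat) (F : 'cV[R]_n -> 'cV[R]_n)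
  (y : 'cV[R]_n) : 'M[R]_n :=
  \matrix_(i, j) derive1 (fun t : R => F (y + t *: delta_mx j 0) i 0) 0.

Definition jacobianP2 (R : realType) (n : nat) (F : 'cV[R]_n -> 'cV[R]_n)
  (p q : 'I_n) (y : 'cV[R]_n) : 'M[R]_2 :=
  let J := jacobianP F y in
  let sel (i : 'I_2) := if (i : nat) == 0%N then p else q in
  \matrix_(i, j) J (sel i) (sel j).

Definition Jsymp (R : realType) : 'M[R]_2 :=
  \matrix_(i, j) (if (i : nat) == 0%N then (if (j : nat) == 1%N then -1 else 0)
                  else (if (j : nat) == 0%N then 1 else 0)).

(* Main.v *)
Require Import Defs.
From HB Require Import structures.
From mathcomp Require Import all_boot all_order all_algebra.
From mathcomp Require Import all_classical all_reals all_analysis.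
From mathcomp Require Import ring.
Import Order.TTheory GRing.Theory Num.Theory.
Local Open Scope ring_scope.
Lemma d1 (R : realType) (a d : R) : derive1 (fun t : R => a + t * d) 0 = d.
Proof.
rewrite derive1E.
have H : is_derive (0:R) 1 (cst a + d *: id) ((0:R) + d *: (1:R)).
  apply: is_deriveD.
have -> : (fun t : R => a + t * d) = cst a + d *: id.
  by apply: funext => t /=; rewrite mulrC.
rewrite derive_val add0r. by rewrite /GRing.scale /= mulr1.
Qed.

Section S.
Variables (R : realType) (n : nat) (F : 'cV[R]_n.+1 -> 'cV[R]_n.+1) (p : 'I_n.+1)
  (g : 'cV[R]_n -> R).
Hypothesis HF : forall y i, F y i 0 = if i == p then y p 0 + g (yhat y p) else y i 0.

Lemma yhat_shift (y : 'cV[R]_n.+1) t :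
  yhat (y + t *: delta_mx p 0) p = yhat y p.
Proof.
apply/matrixP => i j; rewrite !mxE.
have -> : (lift p i == p) = false by apply/negbTE; rewrite eq_sym neq_lift.
by rewrite mulr0 addr0.
Qed.

Lemma jac_off y i j : i != p -> jacobianP F y i j = (i == j)%:R.
Proof.
move=> ip; rewrite mxE.
have -> : (fun t : R => F (y + t *: delta_mx j 0) i 0) =
          (fun t => y i 0 + t * (i == j)%:R).
  by apply: funext => t; rewrite HF (negbTE ip) !mxE eqxx andbT eq_sym.
exact: d1.
Qed.

Lemma jac_diag y : jacobianP F y p p = 1.
Proof.
rewrite mxE.
have -> : (fun t : R => F (y + t *: delta_mx p 0) p 0) =
          (fun t => (y p 0 + g (yhat y p)) + t * 1).
  apply: funext => t; rewrite HF eqxx yhat_shift !mxE !eqxx /=.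
  by rewrite addrAC.
exact: d1.
Qed.

Lemma jac_det y : \det (jacobianP F y) = 1.
Proof.
rewrite (expand_det_col _ p) (bigD1 p) //= jac_diag mul1r.
rewrite big1 ?addr0; last first.
  by move=> i ip; rewrite jac_off // (negbTE ip) mul0r.
rewrite /cofactor addnn -mul2n exprM sqrrN !expr1n mul1r.
rewrite (_ : row' p (col' p (jacobianP F y)) = 1%:M) ?det1 //.
have HJ := jac_off y; move: (jacobianP F y) HJ => J HJ.
apply/matrixP => i j; rewrite !mxE HJ; last by rewrite eq_sym neq_lift.
by rewrite (inj_eq (@lift_inj _ p)).
Qed.
End S.

Lemma symp2 (R : realType) (M : 'M[R]_2) :
  M 0 0 * M 1 1 - M 0 1 * M 1 0 = 1 -> M^T *m Jsymp R *m M = Jsymp R.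
Proof.
move=> H; apply/matrixP => i j.
have o2 (x : 'I_2) : x = 0 \/ x = 1.
  by case: x => [[|[|x]] Hx] //; [left|right]; apply: val_inj.
rewrite !mxE !big_ord_recl !big_ord0 !mxE !big_ord_recl !big_ord0 !mxE /=.
rewrite (_ : lift ord0 ord0 = 1 :> 'I_2); last exact: val_inj.
have e0 : (ord0 : 'I_2) = 0 by [].
rewrite !e0.
case: (o2 i) => ->; case: (o2 j) => -> /=;
  rewrite !(mulr0, mulr1, add0r, addr0, mulrN1, mul0r).
- ring.
- rewrite -H; ring.
- rewrite -H; ring.
- ring.
Qed.

Lemma idx_neq (N : nat) (k : 'I_N) : idx_k k != idx_k1 k.
Proof.
apply/eqP => /(congr1 val); rewrite /= /bump /= add1n => /eqP.
by rewrite eqn_leq ltnn andbF.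
Qed.

Theorem mainTheorem1 (R : realType) (N m : nat) (hN : (1 <= N)%N) (hm : (1 <= m)%N)
  (k : 'I_N) (h : R) (W : 'M[R]_(m, N)) (w b : 'cV[R]_m) (sigma : R -> R)
  (hsigma : forall x : R, derivable sigma x 1) :
  let Up := V_up sigma h W w b k in
  let Low := V_low sigma h W w b k in
  (forall y, trmx (jacobianP2 Up (idx_k k) (idx_k1 k) y) *m Jsymp R
               *m jacobianP2 Up (idx_k k) (idx_k1 k) y = Jsymp R) /\
  (forall y, trmx (jacobianP2 Low (idx_k k) (idx_k1 k) y) *m Jsymp R
               *m jacobianP2 Low (idx_k k) (idx_k1 k) y = Jsymp R) /\
  (forall y, \det (jacobianP Up y) = 1) /\
  (forall y, \det (jacobianP Low y) = 1).
Proof.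
move=> Up Low.
pose gU := fun z => h * vterm sigma W w b k z.
pose gL := fun z => - (h * vterm sigma W w b k z).
have HU : forall y i, Up y i 0 = if i == idx_k k then y (idx_k k) 0
   + gU (yhat y (idx_k k)) else y i 0.
  by move=> y i; rewrite mxE.
have HL : forall y i, Low y i 0 = if i == idx_k1 k then y (idx_k1 k) 0
   + gL (yhat y (idx_k1 k)) else y i 0.
  by move=> y i; rewrite mxE.
have ne := @idx_neq _ k.
have ne' : idx_k1 k != idx_k k.
  by apply/eqP => E; move: ne; rewrite E eqxx.
split.
  move=> y; apply: symp2.
  have d := jac_diag _ _ _ _ gU HU y.
  have o1 := jac_off _ _ _ _ gU HU y _ (idx_k1 k) ne'.
  have o2 := jac_off _ _ _ _ gU HU y _ (idx_k k) ne'.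
  rewrite /jacobianP2 /=; move: (jacobianP Up y) d o1 o2 => J d o1 o2.
  rewrite !mxE /= d o1 o2 eqxx (negbTE ne').
  by rewrite mul1r mulr0 subr0.
split.
  move=> y; apply: symp2.
  have d := jac_diag _ _ _ _ gL HL y.
  have o1 := jac_off _ _ _ _ gL HL y _ (idx_k k) ne.
  have o2 := jac_off _ _ _ _ gL HL y _ (idx_k1 k) ne.
  rewrite /jacobianP2 /=; move: (jacobianP Low y) d o1 o2 => J d o1 o2.
  rewrite !mxE /= d o1 o2 eqxx (negbTE ne).
  by rewrite mul1r mul0r subr0.
split=> y.
- exact: (jac_det _ _ _ _ gU HU).
- exact: (jac_det _ _ _ _ gL HL).
Qed.
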